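(* Assume that for every $A\in\mathcal B(E)$, $m(A)>0$ implies $R1_A(x)>0$ for $m$-a.e. $x$. Let $\nu\in\mathcal M(E)$ with $\nu\ll m$, and let $A\in\mathcal B(E)$ with $m(A)>0$. Then there exist $t_0>0$ and $B\in\mathcal B(E)$ with $\nu(B)>0$ such that $\inf_{x\in B}p_{t_0}(x,A)>0$.
   Context: $(E,\mathcal B(E),m)$ is a $\sigma$-finite measure space; $\mathcal M(E)$ the probability measures on it. $p_t(x,\cdot)$, $t\ge0$, is a transition probability function (probability measures, jointly measurable in $(t,x)$, $p_0(x,A)=1_A(x)$); $p_tf(x)=\int f\,dp_t(x,\cdot)$; $Rf(x)=\int_0^\infty e^{-t}p_tf(x)\,dt$. *)

(* Defs.v *)
From HB Require Import structures.
From mathcomp Require Import all_boot all_order all_algebra.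
From mathcomp Require Import all_classical all_reals all_analysis.
From mathcomp Require Import measurable_realfun.
Set Implicit Arguments. Unset Strict Implicit. Unset Printing Implicit Defensive.
Import Order.TTheory GRing.Theory Num.Theory.
Local Open Scope classical_set_scope.
Local Open Scope ring_scope.
Local Open Scope ereal_scope.

Definition transition_prob_fun d (T : measurableType d) (R : realType)
  (p : R -> T -> probability T R) : Prop :=
  (forall A : set T, measurable A ->
     measurable_fun ((`[0%R, +oo[%classic : set R) `*` [set: T] : set (R * T))
       (fun tx : R * T => (p tx.1 tx.2 A : \bar R))) /\
  (forall x (A : set T), measurable A -> p 0%R x A = (\1_A x)%:E).

Definition resolvent1 d (T : measurableType d) (R : realType)
  (p : R -> T -> probability T R) (A : set T) (x : T) : \bar R :=
  \int[lebesgue_measure]_(t in `[0%R, +oo[%classic) ((expR (- t))%:E * p t x A).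

(* Main.v *)
Require Import Defs.
From HB Require Import structures.
From mathcomp Require Import all_boot all_order all_algebra.
From mathcomp Require Import all_classical all_reals all_analysis.
From mathcomp Require Import measurable_realfun.
Import Order.TTheory GRing.Theory Num.Theory.
Local Open Scope classical_set_scope.
Local Open Scope ring_scope.
Local Open Scope ereal_scope.

Theorem lemma4p1 (d : measure_display) (T : measurableType d) (R : realType)
  (m : {measure set T -> \bar R}) (p : R -> T -> probability T R) :
  sigma_finite [set: T] m ->
  transition_prob_fun p ->
  (forall A : set T, measurable A -> 0 < m A ->
     {ae m, forall x, 0 < resolvent1 p A x}) ->
  forall (nu : probability T R), nu `<< m ->
  forall A : set T, measurable A -> 0 < m A ->
  exists t0 : R, exists B : set T,
    (0 < t0)%R /\ measurable B /\ 0 < nu B /\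
    0 < ereal_inf [set p t0 x A | x in B].
Proof.
move=> _ [pmeas p0] hR nu numl A mA mA0.
set I := (`[0%R, +oo[%classic : set R).
set D := (I `*` [set: T] : set (R * T)).
have mI : measurable I by exact: measurable_itv.
have mD : measurable D by exact: measurableX mI measurableT.
set pp := (fun tx : R * T => p tx.1 tx.2 A) \_ D.
have mpp : measurable_fun [set: R * T] pp.
  by apply/(measurable_restrictT _ mD); exact: pmeas.
have ppE t x : (0 <= t)%R -> pp (t, x) = p t x A.
  move=> t0; rewrite /pp patchE mem_set //=; split => //.
  by rewrite /I /= in_itv /= t0.
have ppN t x : (t < 0)%R -> pp (t, x) = 0.
  move=> t0; rewrite /pp patchE memNset //= /D /I /=; case.
  by rewrite in_itv /= andbT leNgt t0.
have pp_ge0 tx : 0 <= pp tx.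
  by rewrite /pp patchE; case: ifP.
have pp_le1 tx : pp tx <= 1.
  rewrite /pp patchE; case: ifP => // _; exact: probability_le1.
set e := (fun t : R => (expR (- t))%:E).
have me : measurable_fun [set: R] e.
  apply/measurable_EFinP; apply: measurableT_comp; first exact: measurable_expR.
  exact: oppr_measurable.
set f := (fun tx : R * T => e tx.1 * pp tx).
have mf : measurable_fun [set: R * T] f.
  apply: emeasurable_funM => //.
  exact: measurableT_comp.
have e_ge0 t : 0 <= e t by rewrite lee_fin expR_ge0.
have f_ge0 tx : 0 <= f tx by rewrite mule_ge0.
have f_le_pp tx : f tx <= pp tx.
  rewrite /f; case: tx => t x /=.
  have [t0|t0] := ltP t 0%R; first by rewrite ppN // mule0.
  rewrite -[leRHS]mul1e lee_wpmul2r // lee_fin expR_le1 oppr_le0 //.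
set F := (fun x : T => \int[lebesgue_measure]_t f (t, x)).
have FE x : F x = resolvent1 p A x.
  rewrite /resolvent1 integral_mkcond /F; apply: eq_integral => t _.
  rewrite /f /= patchE; case: ifPn => [/set_mem tI|tI].
    by rewrite ppE //; move: tI; rewrite /I /= in_itv /= andbT.
  rewrite ppN ?mule0 //; rewrite ltNge; apply/negP => t0; move: tI.
  by rewrite mem_set // /I /= in_itv /= t0.
have hae : {ae nu, forall x, 0 < F x}.
  have := hR A mA mA0; rewrite /prop_near1 /almost_everywhere /=.
  rewrite /nbhs /= => -[N [mN mN0 sN]].
  exists N; split => //; last first.
    by move=> x Fx; apply: sN; rewrite /= -FE.
  have /= := numl N; rewrite /null_set /=.
  apply => // B mB BN; apply/eqP; rewrite eq_le measure_ge0 andbT -mN0.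
  by apply: le_measure; rewrite ?inE.
have mF : measurable_fun [set: T] F.
  exact: (@measurable_fun_fubini_tonelli_G _ _ (measurableTypeR R) T R lebesgue_measure f mf f_ge0).
have F_ge0 x : 0 <= F x by apply: integral_ge0 => t _.
have Fint : 0 < \int[nu]_x F x.
  rewrite lt_neqAle integral_ge0 // andbT; apply/negP => /eqP /esym F0.
  have : \int[nu]_(x in setT) `|F x| = 0.
    by rewrite -F0; apply: eq_integral => x _; rewrite gee0_abs.
  move/(ae_eq_integral_abs nu measurableT mF) => [N [mN N0 sN]].
  have [M [mM M0 sM]] := hae.
  have : nu setT <= nu (N `|` M).
    apply: le_measure; rewrite ?inE //; first exact: measurableU.
    move=> x _; have [Fx0|Fx0] := boolP (0 < F x).
      left; apply: sN => /= /(_ Logic.I) Fx; by move: Fx0; rewrite Fx ltxx.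
    by right; apply: sM => /=; exact/negP.
  move=> H; have := le_trans H (measureU2 nu mN mM).
  have N0' : (nu : {content set T -> \bar R}) N = 0 := N0.
  have M0' : (nu : {content set T -> \bar R}) M = 0 := M0.
  have T1 : nu setT = 1 := probability_setT nu.
  by rewrite N0' M0' T1 adde0 lee_fin ler10.
set H := (fun t : R => \int[nu]_x f (t, x)).
have fub : \int[lebesgue_measure]_t H t = \int[nu]_x F x.
  exact: (@fubini_tonelli _ _ (measurableTypeR R) T R lebesgue_measure nu f mf f_ge0).
have mH : measurable_fun [set: R] H.
  exact: (@measurable_fun_fubini_tonelli_F _ _ (measurableTypeR R) T R nu f mf f_ge0).
have mppt t : measurable_fun [set: T] (fun x => pp (t, x)).
  exact: measurable_fun_pair2.
have mft t : measurable_fun [set: T] (fun x => f (t, x)).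
  exact: measurable_fun_pair2.
have [t0 t0pos Pt0] : exists2 t0, (0 < t0)%R & 0 < \int[nu]_x pp (t0, x).
  case: (pselect (exists2 t0, (0 < t0)%R & 0 < \int[nu]_x pp (t0, x))) => // nex.
  exfalso.
  have Hle t : H t <= (\1_[set 0%R] t)%:E.
    apply: (@le_trans _ _ (\int[nu]_x pp (t, x))).
      apply: ge0_le_integral => // x _; exact: f_le_pp.
    have [t0|t0] := ltP t 0%R.
      have -> : \int[nu]_x pp (t, x) = 0.
        by apply: integral0_eq => x _; rewrite ppN.
      by rewrite lee_fin.
    move: t0; rewrite le_eqVlt => /orP [/eqP t0|t0].
      rewrite -t0 indicE mem_set //.
      apply: (@le_trans _ _ (\int[nu]_x (cst 1 x))).
        by apply: ge0_le_integral => // x _; exact: pp_le1.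
      have T1 : (nu : {measure set T -> \bar R}) setT = 1 := probability_setT nu.
      by rewrite integral_cst // T1 mule1.
    have : ~ (0 < \int[nu]_x pp (t, x)) by move=> h; apply: nex; exists t.
    move/negP; rewrite -leNgt => h; apply: (le_trans h).
    by rewrite lee_fin.
  have : \int[lebesgue_measure]_t H t <= 0.
    apply: (@le_trans _ _ (\int[lebesgue_measure]_t (\1_[set 0%R] t)%:E)).
      apply: ge0_le_integral => //.
        by move=> t _; apply: integral_ge0.
      apply/measurable_EFinP; exact: measurable_indic.
    rewrite integral_indic // setIT le_eqVlt; apply/orP; left; apply/eqP.
    exact: lebesgue_measure_set1.
  by rewrite fub leNgt Fint.
have T1 : (nu : {measure set T -> \bar R}) setT = 1 := probability_setT nu.
have Ple1 : \int[nu]_x pp (t0, x) <= 1.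
  apply: (@le_trans _ _ (\int[nu]_x (cst 1 x))).
    by apply: ge0_le_integral => // x _; exact: pp_le1.
  by rewrite integral_cst // T1 mule1.
have [r rE] : exists r, \int[nu]_x pp (t0, x) = r%:E.
  exists (fine (\int[nu]_x pp (t0, x))); rewrite fineK // ge0_fin_numE ?ltW //.
  by rewrite (le_lt_trans Ple1) ?ltry.
have r0 : (0 < r)%R by rewrite -lte_fin -rE.
set B := [set x | (r / 2)%:E < pp (t0, x)].
have mB : measurable B.
  by have := emeasurable_fun_o_infty measurableT (mppt t0) (r / 2)%:E; rewrite setTI.
exists t0, B; split => //; split => //; split.
  have bnd : \int[nu]_x pp (t0, x) <= \int[nu]_x ((\1_B x)%:E + (r / 2)%:E).
    apply: ge0_le_integral => //.
      apply: emeasurable_funD; first by apply/measurable_EFinP; exact: measurable_indic.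
      exact: measurable_cst.
    move=> x _; have [xB|xB] := pselect (B x).
      rewrite indicE mem_set //; apply: (le_trans (pp_le1 _)).
      by rewrite lee_fin lerDl divr_ge0 // ltW.
    rewrite indicE memNset // add0e; rewrite /B /= in xB.
    by rewrite leNgt; apply/negP.
  rewrite ge0_integralD // in bnd; last 2 first.
      by apply/measurable_EFinP; exact: measurable_indic.
    by move=> x _; rewrite lee_fin divr_ge0 // ltW.
  rewrite integral_indic // setIT in bnd.
  have c : \int[nu]_x (r / 2)%:E = (r / 2)%:E.
    by have := integral_cst nu measurableT (r / 2)%:E; rewrite T1 mule1.
  rewrite c rE in bnd.
  rewrite lt_neqAle measure_ge0 andbT; apply/negP => /eqP B0.
  have B0' : (nu : {measure set T -> \bar R}) B = 0 by exact: esym B0.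
  move: bnd; rewrite B0' add0e lee_fin; apply/negP; rewrite -ltNge.
  by rewrite ltr_pdivrMr // ltr_pMr // ltr1n.
apply: (@lt_le_trans _ _ (r / 2)%:E); first by rewrite lte_fin divr_gt0.
apply: le_ereal_inf_tmp => y [x Bx <-].
by rewrite -(ppE t0 x (ltW t0pos)); exact: ltW.
Qed.
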